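(* Let $\Gamma$ be a cycle (a graph whose underlying simple graph is a cycle), possibly with some 2-fold edges. Then $\Gamma$ is the family diagram of at most one family of spherical simplices whose dihedral angles lie in $\{\frac{\pi}{2},\frac{\pi}{3},\frac{2\pi}{3},\frac{\pi}{4},\frac{3\pi}{4}\}$ (families considered up to isometry).
   Context: A spherical simplex in $S^n\subset\mathbb{R}^{n+1}$ is given by unit outer normals $f_1,\dots,f_{n+1}$ to its facets; the hyperplanes $f_i^\perp$ cut $S^n$ into $2^{n+1}$ simplices encoded by $\pm f_1,\dots,\pm f_{n+1}$, called a family. For a simplex whose dihedral angles are of the form $\pi/k$ or $\pi(k-1)/k$, its family diagram is the graph with vertices $v_i$ corresponding to the $f_i$, where $v_i$ and $v_j$ are joined by a $(k-2)$-fold edge if the angle between $f_i,f_j$ is $\pi/k$ or $\pi(k-1)/k$, and are not joined if $f_i\perp f_j$. All simplices of a family have the same family diagram; a graph is the family diagram of a family if it is the family diagram of its simplices. *)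

(* Defs.v *)
From HB Require Import structures.
From mathcomp Require Import all_boot all_order all_algebra perm.
From mathcomp Require Import all_classical all_reals.
From mathcomp Require Import trigo.
Set Implicit Arguments. Unset Strict Implicit. Unset Printing Implicit Defensive.
Import Order.TTheory GRing.Theory Num.Theory.
Local Open Scope ring_scope.

Definition dotv {R : realType} {m : nat} (u v : 'rV[R]_m) : R :=
  (u *m v^T) ord0 ord0.

Definition vangle {R : realType} {m : nat} (u v : 'rV[R]_m) : R :=
  acos (dotv u v).

(* A spherical simplex in S^(m-1) subset R^m is encoded by the matrix F whose
   rows f_i = row i F are the unit outer normals to its facets; they must be
   unit vectors and linearly independent. *)
Definition is_simplex {R : realType} {m : nat} (F : 'M[R]_m) : Prop :=
  (forall i, dotv (row i F) (row i F) = 1) /\ F \in unitmx.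

Definition dihedral {R : realType} {m : nat} (F : 'M[R]_m) (i j : 'I_m) : R :=
  pi - vangle (row i F) (row j F).

Definition angles_in_set {R : realType} {m : nat} (F : 'M[R]_m) : Prop :=
  forall i j : 'I_m, i != j ->
    let a := dihedral F i j in
    a = pi / 2 \/ a = pi / 3 \/ a = 2 * pi / 3 \/ a = pi / 4 \/ a = 3 * pi / 4.

Definition multigraph (m : nat) := 'I_m -> 'I_m -> nat.

(* Gamma is the family diagram of (the family of) F: after a relabelling p of
   the vertices, vertices v_i <-> f_(p i), and for i != j, the multiplicity of
   the edge v_i v_j is k - 2 where the angle between f_(p i), f_(p j) is
   pi/k or pi(k-1)/k (k >= 2; k = 2 means orthogonal, i.e. no edge). *)
Definition is_family_diagram {R : realType} {m : nat}
    (Gam : multigraph m) (F : 'M[R]_m) : Prop :=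
  exists p : {perm 'I_m},
    (forall i, Gam i i = 0%N) /\
    forall i j : 'I_m, i != j ->
      exists k : nat, (2 <= k)%N /\ Gam i j = (k - 2)%N /\
        let a := vangle (row (p i) F) (row (p j) F) in
        (a = pi / k%:R \/ a = pi * (k - 1)%:R / k%:R).

Definition is_cycle_diagram (m : nat) (Gam : multigraph m) : Prop :=
  (3 <= m)%N /\
  (forall i j, Gam i j = Gam j i) /\
  (forall i j, (Gam i j <= 2)%N) /\
  exists c : {perm 'I_m}, forall a b : 'I_m,
    (Gam (c a) (c b) != 0%N) =
      ((val b == (val a).+1 %% m)%N || (val a == (val b).+1 %% m)%N).

(* The family of F: the set of vectors +-f_i (encoding the 2^m simplices). *)
Definition family {R : realType} {m : nat} (F : 'M[R]_m) : set 'rV[R]_m :=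
  [set v | exists (i : 'I_m) (s : bool), v = (-1) ^+ s *: row i F].

Definition isometric_families {R : realType} {m : nat} (F G : 'M[R]_m) : Prop :=
  exists Q : 'M[R]_m, Q *m Q^T = 1%:M /\
    forall v : 'rV[R]_m, family F v <-> family G (v *m Q).

(* Main.v *)
Require Import Defs.
From HB Require Import structures.
From mathcomp Require Import all_boot all_order all_algebra perm.
From mathcomp Require Import all_classical all_reals.
From mathcomp Require Import trigo.
From mathcomp Require Import ring lra zify.
Set Implicit Arguments. Unset Strict Implicit.
Import Order.TTheory GRing.Theory Num.Theory.
Local Open Scope ring_scope.

Section Aux.
Variable R : realType.

Lemma cos_pi_sub (x : R) : cos (pi - x) = - cos x.
Proof. by rewrite -cosN opprB cosB cospi sinpi mulr0 addr0 mulrN1. Qed.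

Lemma cos_pi3 : cos (pi / 3%:R) = 1 / 2%:R :> R.
Proof.
set c := cos (pi / 3%:R).
have h1 : cos (pi / 3%:R *+ 2) = - c.
  by rewrite -cos_pi_sub; congr cos; rewrite /c mulr2n; field.
rewrite cos_mulr2n in h1.
have hp : 0 < c.
  apply: cos_gt0_pihalf; have := pi_gt0 R; move=> h; apply/andP; split; lra.
have : (2 * c - 1) * (c + 1) = 0 by rewrite -/c in h1; nra.
move/eqP; rewrite mulf_eq0 => /orP [/eqP h|/eqP h]; lra.
Qed.

Lemma cos_pi4 : 1 / 2%:R <= cos (pi / 4%:R) :> R.
Proof.
have h1 : cos (pi / 4%:R *+ 2) = 0 :> R.
  have -> : pi / 4%:R *+ 2 = pi / 2 :> R by rewrite mulr2n; field.
  exact: cos_pihalf.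
rewrite cos_mulr2n in h1.
set c := cos (pi / 4%:R) in h1 *.
have hp : 0 < c.
  apply: cos_gt0_pihalf; have := pi_gt0 R; move=> h; apply/andP; split; lra.
nra.
Qed.

Lemma dotvE m (u v : 'rV[R]_m) : dotv u v = \sum_i u ord0 i * v ord0 i.
Proof. by rewrite /dotv !mxE; apply: eq_bigr => i _; rewrite !mxE. Qed.

Lemma dotv_range m (u v : 'rV[R]_m) : dotv u u = 1 -> dotv v v = 1 ->
  -1 <= dotv u v <= 1.
Proof.
rewrite !dotvE => hu hv.
have h1 : 0 <= \sum_i (u ord0 i + v ord0 i) ^+ 2 by apply: sumr_ge0 => i _; exact: sqr_ge0.
have h2 : 0 <= \sum_i (u ord0 i - v ord0 i) ^+ 2 by apply: sumr_ge0 => i _; exact: sqr_ge0.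
have e1 : \sum_i (u ord0 i + v ord0 i) ^+ 2 = \sum_i u ord0 i * u ord0 i + \sum_i v ord0 i * v ord0 i + 2 * \sum_i u ord0 i * v ord0 i.
  rewrite mulr_sumr -!big_split /=; apply: eq_bigr => i _; ring.
have e2 : \sum_i (u ord0 i - v ord0 i) ^+ 2 = \sum_i u ord0 i * u ord0 i + \sum_i v ord0 i * v ord0 i - 2 * \sum_i u ord0 i * v ord0 i.
  rewrite mulr_sumr -big_split /= -sumrB; apply: eq_bigr => i _; ring.
rewrite e1 hu hv in h1; rewrite e2 hu hv in h2.
apply/andP; split; lra.
Qed.


Definition cw (g : nat) : R := cos (pi / (g + 2)%:R).

Lemma cw0 : cw 0 = 0.
Proof. by rewrite /cw add0n cos_pihalf. Qed.

Lemma cw_ge g : (g <= 2)%N -> g != 0%N -> 1 / 2%:R <= cw g.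
Proof.
rewrite /cw; case: g => [|[|[|g]]] //= _ _.
  by rewrite cos_pi3 lexx.
exact: cos_pi4.
Qed.

Lemma pair_dot m (u v : 'rV[R]_m) g (K : nat) : dotv u u = 1 -> dotv v v = 1 ->
  (2 <= K)%N -> g = (K - 2)%N ->
  (vangle u v = pi / K%:R \/ vangle u v = pi * (K - 1)%:R / K%:R) ->
  dotv u v = cw g \/ dotv u v = - cw g.
Proof.
move=> hu hv hK -> hang.
have eK : (K - 2 + 2 = K)%N by rewrite subnK.
rewrite /cw eK.
have hr := dotv_range hu hv.
have hc : cos (vangle u v) = dotv u v.
  by rewrite /vangle acosK // in_itv /=.
case: hang => h; rewrite -hc h; [by left | right].
rewrite -cos_pi_sub; congr cos.
have hK0 : K%:R != 0 :> R by rewrite pnatr_eq0 -lt0n; exact: ltnW hK.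
rewrite natrB; last exact: ltnW hK.
by field.
Qed.

Lemma cyc_pot n (r : 'I_n.+1 -> R) : (forall k, r k ^+ 2 = 1) -> \prod_k r k = 1 ->
  exists e : 'I_n.+1 -> R, (forall k, e k ^+ 2 = 1) /\ forall k, e (ordS k) = e k * r k.
Proof.
move=> hr hp.
exists (fun k : 'I_n.+1 => \prod_(j : 'I_n.+1 | (j < k)%N) r j); split.
  move=> k; apply: (big_ind (fun x : R => x ^+ 2 = 1)) => //.
    by rewrite expr1n.
  by move=> x y hx hy; rewrite exprMn hx hy mulr1.
move=> k.
have [hk|hk] := ltnP k n.
  have eS : nat_of_ord (ordS k) = k.+1 by rewrite /= modn_small.
  rewrite eS (bigD1 k) //= mulrC; congr (_ * _).
  apply: eq_bigl => j; rewrite ltnS.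
  by rewrite ltn_neqAle andbC.
have ek : nat_of_ord k = n by apply/eqP; rewrite eqn_leq hk -ltnS ltn_ord.
have eS : nat_of_ord (ordS k) = 0%N by rewrite /= ek modnn.
rewrite eS big_pred0 //.
rewrite -[LHS]hp (bigD1 k) //= mulrC; congr (_ * _).
apply: eq_bigl => j; apply/idP/idP => [hjk|hjn].
  have hj := ltn_ord j; rewrite ltnS in hj; rewrite ek ltn_neqAle hj andbT; apply: contra hjk => /eqP e.
  by apply/eqP; apply: val_inj; rewrite /= e ek.
by apply/eqP => e; move: hjn; rewrite e ek ltnn.
Qed.


Lemma ordS_neq m (l : 'I_m) : (2 < m)%N -> ordS l != l.
Proof.
move=> hm; apply/eqP => /(congr1 (@nat_of_ord m)) /= e.
have hl := ltn_ord l.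
have [h|h] := ltnP l.+1 m.
  by move: e; rewrite modn_small //; lia.
have el : l.+1 = m by lia.
by move: e; rewrite el modnn; lia.
Qed.

Lemma ordSS_neq m (l : 'I_m) : (2 < m)%N -> ordS (ordS l) != l.
Proof.
move=> hm; apply/eqP => /(congr1 (@nat_of_ord m)) /= e.
have hl := ltn_ord l.
have [h|h] := ltnP l.+2 m.
  by move: e; rewrite (@modn_small l.+1) ?(@modn_small l.+2) //; lia.
have [el|el] : l.+2 = m \/ l.+1 = m by lia.
  have e1 : (l.+1 %% m = l.+1)%N by rewrite modn_small //; lia.
  by move: e; rewrite e1 el modnn; lia.
by move: e; rewrite el modnn modn_small //; lia.
Qed.

Lemma no_coxeter m (A : 'M[R]_m) (x : 'I_m -> R) :
  (2 < m)%N -> A \in unitmx ->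
  (forall k, (A *m A^T) k k = 1) ->
  (forall k l, l != k -> l != ordS k -> k != ordS l -> (A *m A^T) k l = 0) ->
  (forall k, x k ^+ 2 = 1) ->
  (forall k, x k * x (ordS k) * (A *m A^T) k (ordS k) <= - (1 / 2%:R)) -> False.
Proof.
move=> hm hA hd h0 hx hadj.
set H := A *m A^T.
have Hsym : forall k l, H k l = H l k.
  by move=> k l; rewrite /H !mxE; apply: eq_bigr => i _; rewrite !mxE mulrC.
set X : 'rV[R]_m := \row_k x k.
have eQ : (X *m H *m X^T) ord0 ord0 = \sum_l (\sum_k x k * H k l * x l).
  rewrite !mxE; apply: eq_bigr => l _; rewrite !mxE mulr_suml.
  by apply: eq_bigr => k _; rewrite !mxE.
have hT : forall l, \sum_k x k * H k l * x l <= 0.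
  move=> l.
  set p := ord_pred l; set s := ordS l.
  have sp : ordS p = l by rewrite /p ord_predK.
  have hsl : s != l by exact: ordS_neq.
  have hpl : p != l.
    apply/eqP => e; move: (ordS_neq l hm); rewrite -{1}e sp eqxx //.
  have hsp : s != p.
    apply/eqP => e; move: (ordSS_neq l hm); rewrite -/s e sp eqxx //.
  rewrite (bigD1 l) //= (bigD1 p) /=; last by rewrite hpl.
  rewrite (bigD1 s) /=; last by rewrite hsl hsp.
  rewrite big1; last first.
    move=> k /andP [/andP [hkl hkp] hks].
    rewrite h0 ?mulr0 ?mul0r //.
    - by rewrite eq_sym.
    - by apply: contra hkp => /eqP e; rewrite /p e ordSK.
  have e1 : x l * H l l * x l = 1 by rewrite hd mulr1 -expr2 hx.
  have e2 : x p * H p l * x l = x p * x (ordS p) * H p (ordS p) by rewrite sp; ring.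
  have e3 : x s * H s l * x l = x l * x (ordS l) * H l (ordS l) by rewrite Hsym; ring.
  rewrite e1 e2 e3 addr0.
  have := hadj p; have := hadj l; lra.
have hle : (X *m H *m X^T) ord0 ord0 <= 0.
  by rewrite eQ; apply: sumr_le0 => l _; exact: hT.
have eS : (X *m H *m X^T) ord0 ord0 = \sum_i ((X *m A) ord0 i) ^+ 2.
  have -> : X *m H *m X^T = (X *m A) *m (X *m A)^T by rewrite trmx_mul /H !mulmxA.
  rewrite [LHS]mxE; apply: eq_bigr => i _.
  by rewrite expr2 [in X in _ * X = _]mxE.
have hXA : X *m A = 0.
  have hz := @psumr_eq0P _ _ xpredT (fun i => ((X *m A) ord0 i) ^+ 2)
    (fun i _ => sqr_ge0 _).
  apply/matrixP => i j; rewrite (ord1 i) [RHS]mxE.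
  apply/eqP; rewrite -sqrf_eq0; apply/eqP; apply: hz => //.
  by apply: le_anti; rewrite -eS hle /= eS; apply: sumr_ge0 => k _; exact: sqr_ge0.
have hX : X = 0 by rewrite -(mulmxK hA X) hXA mul0mx.
have k0 : 'I_m := Ordinal (ltnW (ltnW hm)).
have := hx k0; have := congr1 (fun M : 'rV[R]_m => M ord0 k0) hX.
by rewrite /= !mxE => ->; rewrite expr0n /= => /eqP; rewrite eq_sym oner_eq0.
Qed.


Lemma gramE m (M : 'M[R]_m) a b : (M *m M^T) a b = dotv (row a M) (row b M).
Proof. by rewrite dotvE mxE; apply: eq_bigr => i _; rewrite !mxE. Qed.

Lemma row_row_perm m n (s : 'S_m) (M : 'M[R]_(m, n)) a : row a (row_perm s M) = row (s a) M.
Proof. by apply/rowP => j; rewrite !mxE. Qed.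

Lemma extract m (Gam : multigraph m) (c : {perm 'I_m}) (F : 'M[R]_m) :
  is_simplex F -> is_family_diagram Gam F ->
  exists s : {perm 'I_m}, row_perm s F \in unitmx /\
   (forall k, (row_perm s F *m (row_perm s F)^T) k k = 1) /\
   (forall a b, a != b ->
      (row_perm s F *m (row_perm s F)^T) a b = cw (Gam (c a) (c b)) \/
      (row_perm s F *m (row_perm s F)^T) a b = - cw (Gam (c a) (c b))).
Proof.
move=> [hu hinv] [p [_ hp]].
exists (c * p)%g; split; first by rewrite row_permE unitmx_mul unitmx_perm.
split.
  by move=> k; rewrite gramE row_row_perm hu.
move=> a b hab.
have hcab : c a != c b by rewrite (inj_eq perm_inj).
have [K [hK [hg hang]]] := hp _ _ hcab.
rewrite gramE !row_row_perm !permM.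
exact: pair_dot (hu _) (hu _) hK hg hang.
Qed.


Lemma sign_cycle n (Gam : multigraph n.+1) (c : {perm 'I_n.+1}) (A : 'M[R]_n.+1) :
  (2 < n.+1)%N -> (forall i j, (Gam i j <= 2)%N) ->
  (forall a b : 'I_n.+1, (Gam (c a) (c b) != 0%N) =
      ((val b == (val a).+1 %% n.+1)%N || (val a == (val b).+1 %% n.+1)%N)) ->
  A \in unitmx -> (forall k, (A *m A^T) k k = 1) ->
  (forall a b, a != b ->
      (A *m A^T) a b = cw (Gam (c a) (c b)) \/
      (A *m A^T) a b = - cw (Gam (c a) (c b))) ->
  \prod_k (- ((A *m A^T) k (ordS k) / cw (Gam (c k) (c (ordS k))))) = -1.
Proof.
move=> hm hle hadj hA hd hpair.
set H := A *m A^T.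
set w := fun k => cw (Gam (c k) (c (ordS k))).
have hw : forall k, 1 / 2%:R <= w k.
  move=> k; apply: cw_ge; first exact: hle.
  by rewrite hadj eqxx.
have h0 : forall k l, l != k -> l != ordS k -> k != ordS l -> H k l = 0.
  move=> k l h1 h2 h3.
  have hg : Gam (c k) (c l) = 0%N.
    apply/eqP; apply/negPn; rewrite hadj; apply/negP => /orP [e|e].
      by move/negP: h2; apply; exact: e.
    by move/negP: h3; apply; exact: e.
  have hkl : k != l by rewrite eq_sym.
  by case: (hpair _ _ hkl); rewrite hg cw0 ?oppr0.
have hsq : forall k, H k (ordS k) ^+ 2 = w k ^+ 2.
  move=> k; have hk : k != ordS k by rewrite eq_sym ordS_neq.
  by case: (hpair _ _ hk) => ->; rewrite ?sqrrN.
set t := fun k => - (H k (ordS k) / w k).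
have ht : forall k, t k ^+ 2 = 1.
  move=> k; rewrite /t sqrrN expr_div_n hsq divff //.
  by rewrite expf_neq0 //; apply/eqP => e; have := hw k; rewrite e; lra.
have hpm : (\prod_k t k) ^+ 2 = 1.
  apply: (big_ind (fun x : R => x ^+ 2 = 1)) => //; first by rewrite expr1n.
  by move=> x y hx hy; rewrite exprMn hx hy mulr1.
move/eqP: hpm; rewrite sqrf_eq1 => /orP [/eqP hp1|/eqP //].
exfalso.
have [x [hx hxS]] := cyc_pot ht hp1.
apply: (no_coxeter (x := x) hm hA hd h0 hx) => k.
rewrite hxS.
have -> : x k * (x k * t k) * H k (ordS k) = x k ^+ 2 * (t k * H k (ordS k)) by ring.
have hwk := hw k.
have hw0 : w k != 0 by apply/eqP => e; rewrite e in hwk; lra.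
rewrite hx mul1r /t mulNr mulrAC -expr2 hsq expr2 mulfK //.
lra.
Qed.


Lemma hw_lemma n (Gam : multigraph n.+1) (c : {perm 'I_n.+1}) :
  (forall i j, (Gam i j <= 2)%N) ->
  (forall a b : 'I_n.+1, (Gam (c a) (c b) != 0%N) =
      ((val b == (val a).+1 %% n.+1)%N || (val a == (val b).+1 %% n.+1)%N)) ->
  forall k, 1 / 2%:R <= cw (Gam (c k) (c (ordS k))).
Proof.
move=> hle hadj k; apply: cw_ge; first exact: hle.
by rewrite hadj eqxx.
Qed.

Lemma h0_lemma n (Gam : multigraph n.+1) (c : {perm 'I_n.+1}) (A : 'M[R]_n.+1) :
  (forall a b : 'I_n.+1, (Gam (c a) (c b) != 0%N) =
      ((val b == (val a).+1 %% n.+1)%N || (val a == (val b).+1 %% n.+1)%N)) ->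
  (forall a b, a != b ->
      (A *m A^T) a b = cw (Gam (c a) (c b)) \/
      (A *m A^T) a b = - cw (Gam (c a) (c b))) ->
  forall k l, l != k -> l != ordS k -> k != ordS l -> (A *m A^T) k l = 0.
Proof.
move=> hadj hpair k l h1 h2 h3.
have hg : Gam (c k) (c l) = 0%N.
  apply/eqP; apply/negPn; rewrite hadj; apply/negP => /orP [e|e].
    by move/negP: h2; apply; exact: e.
  by move/negP: h3; apply; exact: e.
have hkl : k != l by rewrite eq_sym.
by case: (hpair _ _ hkl); rewrite hg cw0 ?oppr0.
Qed.

Lemma hsq_lemma n (Gam : multigraph n.+1) (c : {perm 'I_n.+1}) (A : 'M[R]_n.+1) :
  (2 < n.+1)%N ->
  (forall a b, a != b ->
      (A *m A^T) a b = cw (Gam (c a) (c b)) \/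
      (A *m A^T) a b = - cw (Gam (c a) (c b))) ->
  forall k, (A *m A^T) k (ordS k) ^+ 2 = cw (Gam (c k) (c (ordS k))) ^+ 2.
Proof.
move=> hm hpair k; have hk : k != ordS k by rewrite eq_sym ordS_neq.
by case: (hpair _ _ hk) => ->; rewrite ?sqrrN.
Qed.

Lemma gram_sym m (M : 'M[R]_m) a b : (M *m M^T) a b = (M *m M^T) b a.
Proof. by rewrite !mxE; apply: eq_bigr => i _; rewrite !mxE mulrC. Qed.

Lemma sign_of (x : R) : x ^+ 2 = 1 -> exists b : bool, x = (-1) ^+ b.
Proof.
move/eqP; rewrite sqrf_eq1 => /orP [/eqP ->|/eqP ->]; first by exists false.
by exists true; rewrite expr1.
Qed.

End Aux.

Theorem lemma1 (R : realType) (m : nat) (Gam : multigraph m) :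
  is_cycle_diagram Gam ->
  forall F G : 'M[R]_m,
    is_simplex F -> angles_in_set F -> is_family_diagram Gam F ->
    is_simplex G -> angles_in_set G -> is_family_diagram Gam G ->
    isometric_families F G.
Proof.
case: m Gam => [|n] Gam [hm [hsym [hle [c hadj]]]] F G hF _ hFd hG _ hGd.
  by [].
have [sF [hA [hAd hAp]]] := extract c hF hFd.
have [sG [hB [hBd hBp]]] := extract c hG hGd.
set A := row_perm sF F in hA hAd hAp.
set B := row_perm sG G in hB hBd hBp.
have pA := sign_cycle hm hle hadj hA hAd hAp.
have pB := sign_cycle hm hle hadj hB hBd hBp.
set w := fun k => cw R (Gam (c k) (c (ordS k))).
have hw := hw_lemma R hle hadj.
have hw0 : forall k, w k != 0.
  by move=> k; apply/eqP => e; have := hw k; rewrite -/(w k) e; lra.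
have sqA := hsq_lemma hm hAp.
have sqB := hsq_lemma hm hBp.
set r := fun k => ((A *m A^T) k (ordS k) / w k) * ((B *m B^T) k (ordS k) / w k).
have hr : forall k, r k ^+ 2 = 1.
  move=> k; rewrite /r exprMn !expr_div_n sqA sqB -/(w k) divff ?mul1r ?divff //;
  by rewrite expf_neq0.
have hprod : \prod_k r k = 1.
  rewrite (eq_bigr (fun k => (- ((A *m A^T) k (ordS k) / w k)) *
     (- ((B *m B^T) k (ordS k) / w k)))); last by move=> k _; rewrite mulrNN.
  by rewrite big_split /= pA pB mulrNN mulr1.
have [e [he heS]] := cyc_pot hr hprod.
have adjc : forall a, (B *m B^T) a (ordS a) = e a * e (ordS a) * (A *m A^T) a (ordS a).
  move=> a; rewrite heS.
  have -> : e a * (e a * r a) * (A *m A^T) a (ordS a) = e a ^+ 2 * (r a * (A *m A^T) a (ordS a)) by ring.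
  rewrite he mul1r /r.
  have hwa := hw0 a.
  have := sqA a; rewrite -/(w a) => hs.
  apply/eqP; rewrite -subr_eq0; apply/eqP.
  have -> : (B *m B^T) a (ordS a) - (A *m A^T) a (ordS a) / w a * ((B *m B^T) a (ordS a) / w a) * (A *m A^T) a (ordS a)
     = (B *m B^T) a (ordS a) * (w a ^+ 2 - (A *m A^T) a (ordS a) ^+ 2) / w a ^+ 2.
    by field.
  by rewrite hs subrr mulr0 mul0r.
have key : forall a b, (B *m B^T) a b = e a * e b * (A *m A^T) a b.
  move=> a b.
  have [<-|hab] := eqVneq a b; first by rewrite hAd hBd mulr1 -expr2 he.
  have [->|h1] := eqVneq b (ordS a); first exact: adjc.
  have [->|h2] := eqVneq a (ordS b).
    by rewrite gram_sym adjc gram_sym [e (ordS b) * _]mulrC.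
  rewrite (h0_lemma hadj hAp) ?(h0_lemma hadj hBp) ?mulr0 // eq_sym //.
set B' := \matrix_(a, j) (e a * B a j).
have hB' : B' *m B'^T = A *m A^T.
  apply/matrixP => a b.
  have -> : (B' *m B'^T) a b = e a * e b * (B *m B^T) a b.
    rewrite !mxE mulr_sumr; apply: eq_bigr => j _; rewrite !mxE; ring.
  rewrite key.
  have -> : e a * e b * (e a * e b * (A *m A^T) a b) = e a ^+ 2 * e b ^+ 2 * (A *m A^T) a b by ring.
  by rewrite !he !mul1r.
set Q := invmx A *m B'.
have hAt : A^T \in unitmx by rewrite unitmx_tr.
have hQ : Q *m Q^T = 1%:M.
  rewrite /Q trmx_mul !mulmxA -(mulmxA (invmx A) B') hB' trmx_inv.
  by rewrite !mulmxA mulVmx // mul1mx mulmxV.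
have hrow : forall a, row (sF a) F *m Q = e a *: row (sG a) G.
  move=> a; rewrite -(row_row_perm sF F) -/A -row_mul /Q mulmxA mulmxV // mul1mx.
  by apply/rowP => j; rewrite !mxE.
exists Q; split => // v; split.
  move=> [i [s ->]].
  have [b hb] := sign_of (he ((sF^-1)%g i)).
  exists (sG ((sF^-1)%g i)), (s (+) b).
  by rewrite -scalemxAl -{1}(permKV sF i) hrow hb scalerA signr_addb.
move=> [j [s hv]].
set a := (sG^-1)%g j.
have [b hb] := sign_of (he a).
exists (sF a), (s (+) b).
have hv2 : v *m Q = (((-1) ^+ s * e a) *: row (sF a) F) *m Q.
  rewrite hv -scalemxAl hrow scalerA -mulrA.
  by rewrite -expr2 he mulr1 /a permKV.
move: (congr1 (mulmx^~ Q^T) hv2) => /=.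
by rewrite -(mulmxA v Q) -(mulmxA _ Q) hQ !mulmx1 => ->; rewrite hb signr_addb.
Qed.
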